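(* Assume $A$ is passive, i.e. $\operatorname{Re}(x^*Ax)<0$ for all nonzero $x\in\mathbb C^n$, that $F\succeq0$, and that $V_k$ has full column rank. Let $X_k=V_kT_k^{-1}V_k^*$ and $R_k=C^*C+A^*X_k+X_kA-X_kFX_k$. Define $$K_k:=(V_k^*V_k)^{-1}V_k^*A^*V_k,\qquad g_k:=(V_k^*V_k)^{-1}V_k^*C^*.$$ Then: (i) $V_k^*R_kV_k=0$ if and only if $g_k=T_k^{-1}\mathbf 1$. (ii) $V_k^*R_kV_k=0$ if and only if $\Lambda_k^*T_k+T_kK_k-V_k^*FV_k=0$. (iii) If $V_k^*R_kV_k=0$, then, after a suitable ordering, $\alpha_j=-\bar\lambda_j$ for $j=1,\dots,k$, where $\lambda_1,\dots,\lambda_k$ are the eigenvalues (with multiplicity) of $$(V_k^*V_k)^{-1}V_k^*\big(A^*-V_kT_k^{-1}V_k^*F\big)V_k .$$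
   Context: Let $A\in\mathbb C^{n\times n}$, let $C\in\mathbb C^{1\times n}$, and let $F\in\mathbb C^{n\times n}$ be Hermitian; $M^*$ denotes the conjugate transpose and $\succeq0$ denotes Hermitian positive semidefinite. Let $\alpha_1,\dots,\alpha_k\in\mathbb C$ be pairwise distinct with $\operatorname{Re}(\alpha_j)>0$ and $-A^*+\alpha_jI$ nonsingular. Set $$V_k=\big[(-A^*+\alpha_1I)^{-1}C^*,\dots,(-A^*+\alpha_kI)^{-1}C^*\big]\in\mathbb C^{n\times k},$$ $\Lambda_k=\operatorname{diag}(\alpha_1,\dots,\alpha_k)$, $\mathbf 1=[1,\dots,1]^T\in\mathbb R^k$, and let $T_k\in\mathbb C^{k\times k}$ be the matrix with entries $T_k(i,j)=\dfrac{1+(V_k^*FV_k)_{ij}}{\bar\alpha_i+\alpha_j}$, i.e. the unique solution of $\Lambda_k^*T+T\Lambda_k=V_k^*FV_k+\mathbf 1\mathbf 1^*$. Under these assumptions $T_k$ is Hermitian positive definite. *)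

(* Defs.v *)
(* Complex numbers are modelled by an arbitrary
   numClosedFieldType C (algebraically closed field with conjugation and
   partial order, e.g. algC). *)
From HB Require Import structures.
From mathcomp Require Import all_boot all_order all_algebra.
Set Implicit Arguments. Unset Strict Implicit. Unset Printing Implicit Defensive.
Import Order.TTheory GRing.Theory Num.Theory.
Local Open Scope ring_scope.

Definition ctr (C : numClosedFieldType) (m n : nat) (M : 'M[C]_(m, n)) : 'M[C]_(n, m) :=
  (map_mx Num.conj M)^T.

Definition Vk (C : numClosedFieldType) (n k : nat) (A : 'M[C]_n) (Cm : 'rV[C]_n)
  (alpha : 'I_k -> C) : 'M[C]_(n, k) :=
  \matrix_(i < n, j < k) ((invmx (- ctr A + (alpha j)%:M) *m ctr Cm) i ord0).

Definition Tk (C : numClosedFieldType) (n k : nat) (F : 'M[C]_n) (V : 'M[C]_(n, k))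
  (alpha : 'I_k -> C) : 'M[C]_k :=
  \matrix_(i < k, j < k) ((1 + (ctr V *m F *m V) i j) / ((alpha i)^* + alpha j)).

Definition Lamk (C : numClosedFieldType) (k : nat) (alpha : 'I_k -> C) : 'M[C]_k :=
  diag_mx (\row_j alpha j).

(* Main.v *)
Require Import Defs.
From HB Require Import structures.
From mathcomp Require Import all_boot all_order all_algebra.
From mathcomp Require Import ring.
Import Order.TTheory GRing.Theory Num.Theory.
Local Open Scope ring_scope.

Lemma ctr_mul (C : numClosedFieldType) m n p (A : 'M[C]_(m,n)) (B : 'M[C]_(n,p)) :
  ctr (A *m B) = ctr B *m ctr A.
Proof. by rewrite /ctr map_mxM trmx_mul. Qed.
Lemma ctrK (C : numClosedFieldType) m n (A : 'M[C]_(m,n)) : ctr (ctr A) = A.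
Proof. by apply/matrixP => i j; rewrite !mxE conjCK. Qed.
Lemma ctr_inv (C : numClosedFieldType) n (A : 'M[C]_n) : ctr (invmx A) = invmx (ctr A).
Proof. by rewrite /ctr map_invmx trmx_inv. Qed.
Lemma ctrD (C : numClosedFieldType) m n (A B : 'M[C]_(m,n)) : ctr (A + B) = ctr A + ctr B.
Proof. by apply/matrixP => i j; rewrite !mxE rmorphD. Qed.
Lemma ctrN (C : numClosedFieldType) m n (A : 'M[C]_(m,n)) : ctr (- A) = - ctr A.
Proof. by apply/matrixP => i j; rewrite !mxE rmorphN. Qed.
Lemma ctrB (C : numClosedFieldType) m n (A B : 'M[C]_(m,n)) : ctr (A - B) = ctr A - ctr B.
Proof. by rewrite ctrD ctrN. Qed.
Lemma ctr0 (C : numClosedFieldType) m n : ctr (0 : 'M[C]_(m,n)) = 0.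
Proof. by apply/matrixP => i j; rewrite !mxE rmorph0. Qed.
Lemma ctrZ (C : numClosedFieldType) m n (a : C) (A : 'M[C]_(m,n)) : ctr (a *: A) = a^* *: ctr A.
Proof. by apply/matrixP => i j; rewrite !mxE rmorphM. Qed.
Lemma ctrE (C : numClosedFieldType) m n (A : 'M[C]_(m,n)) i j : ctr A i j = (A j i)^*.
Proof. by rewrite !mxE. Qed.
Lemma ctr_const1 (C : numClosedFieldType) m n : ctr (const_mx 1 : 'M[C]_(m,n)) = const_mx 1.
Proof. by apply/matrixP => i j; rewrite !mxE conjC1. Qed.

Lemma mxBE (R : zmodType) m n (A B : 'M[R]_(m,n)) i j : (A - B) i j = A i j - B i j.
Proof. by rewrite !mxE. Qed.
Lemma mxDE (R : nmodType) m n (A B : 'M[R]_(m,n)) i j : (A + B) i j = A i j + B i j.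
Proof. by rewrite !mxE. Qed.
Lemma mxZE (R : pzRingType) m n a (A : 'M[R]_(m,n)) i j : (a *: A) i j = a * A i j.
Proof. by rewrite !mxE. Qed.

Lemma norm_vec_eq0 (C : numClosedFieldType) m (z : 'cV[C]_m) :
  (ctr z *m z) ord0 ord0 = 0 -> z = 0.
Proof.
rewrite mxE => H; apply/matrixP => i j; rewrite (ord1 j) mxE.
have H0 : forall l : 'I_m, true -> 0 <= ctr z ord0 l * z l ord0.
  by move=> l _; rewrite ctrE mulrC mul_conjC_ge0.
have := psumr_eq0P H0 H (i := i) isT.
by rewrite ctrE mulrC => /eqP; rewrite mul_conjC_eq0 => /eqP.
Qed.

Lemma outer_eq0 (C : numClosedFieldType) m (w : 'cV[C]_m) : w *m ctr w = 0 -> w = 0.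
Proof.
move=> H; apply/matrixP => i j; rewrite (ord1 j).
have := congr1 (fun M : 'M[C]_m => M i i) H; rewrite !mxE big_ord1 ctrE => /eqP.
by rewrite mul_conjC_eq0 => /eqP ->.
Qed.

Lemma norm_vec_ge0 (C : numClosedFieldType) m (z : 'cV[C]_m) :
  0 <= (ctr z *m z) ord0 ord0.
Proof.
by rewrite mxE; apply: sumr_ge0 => l _; rewrite ctrE mulrC mul_conjC_ge0.
Qed.

Lemma unit_of_ker (C : numClosedFieldType) m (A : 'M[C]_m) :
  (forall x : 'cV[C]_m, A *m x = 0 -> x = 0) -> A \in unitmx.
Proof.
move=> H; rewrite -unitmx_tr unitmxE unitfE; apply/det0P => -[v vn0 vA].
have : A *m v^T = 0 by rewrite -[A]trmxK -trmx_mul vA trmx0.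
move/H => /(congr1 trmx); rewrite trmxK trmx0 => v0.
by rewrite v0 eqxx in vn0.
Qed.

Lemma psd_ker (C : numClosedFieldType) n (F : 'M[C]_n) (hF : ctr F = F)
  (hpsd : forall x : 'cV[C]_n, 0 <= (ctr x *m F *m x) ord0 ord0)
  (y : 'cV[C]_n) : (ctr y *m F *m y) ord0 ord0 = 0 -> F *m y = 0.
Proof.
move=> hy; set z := F *m y.
set s := (ctr z *m z) ord0 ord0.
set q := (ctr z *m F *m z) ord0 ord0.
have s0 : 0 <= s by apply: norm_vec_ge0.
have q0 : 0 <= q by apply: hpsd.
have e1 : ctr y *m F *m z = ctr z *m z by rewrite /z ctr_mul hF.
have e2 : ctr z *m F *m y = ctr z *m z by rewrite /z ctr_mul hF -!mulmxA.
have := hpsd ((q + 1) *: y - s *: z).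
rewrite ctrB !ctrZ (geC0_conj s0) geC0_conj ?addr_ge0 ?ler01 //.
rewrite !mulmxBl !mulmxBr.
rewrite -!scalemxAl -!scalemxAr.
rewrite -/z e1 e2.
rewrite !mxBE !mxZE -/s -/q hy.
have -> : (q + 1) * ((q + 1) * 0) - (q + 1) * (s * s) -
    (s * ((q + 1) * s) - s * (s * q)) = - ((s * s) * (q + 2%:R)).
  by ring.
rewrite oppr_ge0 => hle.
have : (s * s) * (q + 2%:R) == 0.
  by rewrite eq_le hle mulr_ge0 ?mulr_ge0 ?addr_ge0 ?ler0n.
rewrite mulf_eq0 mulf_eq0 orbb => /orP [/eqP sz|].
  by apply: norm_vec_eq0.
move=> /eqP hq; have : 0 < q + 2%:R by rewrite ltr_wpDl // ltr0n.
by rewrite hq ltxx.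
Qed.

Lemma AV_eq (C : numClosedFieldType) n k (A : 'M[C]_n) (Cm : 'rV[C]_n) (alpha : 'I_k -> C)
  (hns : forall j, (- ctr A + (alpha j)%:M) \in unitmx) :
  ctr A *m Vk A Cm alpha = Vk A Cm alpha *m Lamk alpha - ctr Cm *m const_mx 1.
Proof.
apply/matrixP => i j.
set v := invmx (- ctr A + (alpha j)%:M) *m ctr Cm.
have hv : (- ctr A + (alpha j)%:M) *m v = ctr Cm by rewrite /v mulmxA mulmxV ?mul1mx.
have hv2 : ctr A *m v = alpha j *: v - ctr Cm.
  by rewrite -hv mulmxDl mulNmx mul_scalar_mx opprD opprK addrC subrK.
have e1 : (ctr A *m Vk A Cm alpha) i j = (ctr A *m v) i ord0.
  by rewrite !mxE; apply: eq_bigr => l _; rewrite !mxE.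
rewrite e1 hv2 mxBE mxZE /Lamk mul_mx_diag mxBE !mxE big_ord1 !mxE mulr1 mulrC.
by [].
Qed.

Lemma den_nz (C : numClosedFieldType) k (alpha : 'I_k -> C)
  (hre : forall j, 0 < 'Re (alpha j)) i j : (alpha i)^* + alpha j != 0.
Proof.
apply/eqP => h; have := congr1 (fun x => 'Re x) h.
rewrite raddfD /= Re_conj raddf0 => h2.
have : 0 < 'Re (alpha i) + 'Re (alpha j) by rewrite addr_gt0.
by rewrite h2 ltxx.
Qed.

Lemma ctr_Lam (C : numClosedFieldType) k (alpha : 'I_k -> C) :
  ctr (Lamk alpha) = diag_mx (\row_j (alpha j)^*).
Proof.
apply/matrixP => i j; rewrite !mxE; case: eqP => [->|]; rewrite ?eqxx ?mulr1n //.
move=> /eqP; rewrite eq_sym => /negbTE ->; by rewrite !mulr0n rmorph0.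
Qed.

Lemma Lyap (C : numClosedFieldType) n k (F : 'M[C]_n) (V : 'M[C]_(n,k)) (alpha : 'I_k -> C)
  (hre : forall j, 0 < 'Re (alpha j)) :
  ctr (Lamk alpha) *m Tk F V alpha + Tk F V alpha *m Lamk alpha
  = ctr V *m F *m V + (const_mx 1 : 'cV[C]_k) *m (const_mx 1 : 'rV[C]_k).
Proof.
apply/matrixP => i j.
rewrite ctr_Lam /Lamk mul_diag_mx mul_mx_diag !mxDE !mxE big_ord1 !mxE mulr1.
set G := (ctr V *m F *m V) i j.
have hd := @den_nz _ _ _ hre i j.
by field.
Qed.

Lemma TkE (C : numClosedFieldType) n k (F : 'M[C]_n) (V : 'M[C]_(n,k)) (alpha : 'I_k -> C) i j :
  Tk F V alpha i j = (1 + (ctr V *m F *m V) i j) / ((alpha i)^* + alpha j).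
Proof. by rewrite mxE. Qed.

Lemma T_herm (C : numClosedFieldType) n k (F : 'M[C]_n) (V : 'M[C]_(n,k)) (alpha : 'I_k -> C)
  (hF : ctr F = F) : ctr (Tk F V alpha) = Tk F V alpha.
Proof.
have hG : ctr (ctr V *m F *m V) = ctr V *m F *m V by rewrite !ctr_mul ctrK hF mulmxA.
apply/matrixP => i j; rewrite ctrE !TkE fmorph_div rmorphD rmorph1 rmorphD /= conjCK.
by rewrite -ctrE hG [alpha j + _]addrC.
Qed.

Lemma vander_zero (C : numClosedFieldType) k (alpha : 'I_k -> C) (hinj : injective alpha)
  (x : 'I_k -> C) (hs : forall m, \sum_l alpha l ^+ m * x l = 0) : forall l, x l = 0.
Proof.
have hp : forall p : {poly C}, \sum_l p.[alpha l] * x l = 0.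
  move=> p; under eq_bigr => l _ do rewrite horner_coef mulr_suml.
  rewrite exchange_big /=; apply: big1 => i _.
  under eq_bigr => l _ do rewrite -mulrA.
  by rewrite -mulr_sumr hs mulr0.
move=> j; pose p := \prod_(l | l != j) ('X - (alpha l)%:P).
have := hp p; rewrite (bigD1 j) //= big1 ?addr0.
  move/eqP; rewrite mulf_eq0 => /orP [|/eqP //].
  rewrite /p horner_prod => /eqP h; exfalso; move: h; apply/eqP/prodf_neq0 => l hl.
  rewrite hornerXsubC subr_eq0; apply/eqP => /hinj e; by rewrite e eqxx in hl.
move=> l hl; rewrite /p horner_prod (bigD1 l) //= hornerXsubC subrr mul0r mul0r.
by [].
Qed.

Lemma T_unit (C : numClosedFieldType) n k (F : 'M[C]_n) (V : 'M[C]_(n,k)) (alpha : 'I_k -> C)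
  (hF : ctr F = F)
  (hinj : injective alpha)
  (hre : forall j, 0 < 'Re (alpha j))
  (hpsd : forall x : 'cV[C]_n, 0 <= (ctr x *m F *m x) ord0 ord0) :
  Tk F V alpha \in unitmx.
Proof.
set T := Tk F V alpha; set L := Lamk alpha.
set o := (const_mx 1 : 'cV[C]_k); set or := (const_mx 1 : 'rV[C]_k).
have hL : ctr L *m T + T *m L = ctr V *m F *m V + o *m or by apply: Lyap.
have hT : ctr T = T by apply: T_herm.
have hor : ctr o = or by apply: ctr_const1.
have step : forall x : 'cV[C]_k, T *m x = 0 -> or *m x = 0 /\ T *m (L *m x) = 0.
  move=> x Tx.
  have e := congr1 (fun M => ctr x *m M *m x) hL; simpl in e.
  move: e; rewrite mulmxDr mulmxDl mulmxDr mulmxDl.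
  rewrite -!mulmxA Tx mulmx0 mulmxA.
  have -> : ctr x *m T = 0 by rewrite -hT -ctr_mul Tx ctr0.
  rewrite mul0mx mulmx0 add0r.
  have -> : ctr x *m (ctr V *m (F *m (V *m x))) = ctr (V *m x) *m F *m (V *m x).
    by rewrite ctr_mul !mulmxA.
  have -> : ctr x *m (o *m (or *m x)) = ctr (or *m x) *m (or *m x).
    by rewrite ctr_mul -hor ctrK mulmxA.
  move=> /(congr1 (fun M : 'M[C]_1 => M ord0 ord0)); rewrite mxE mxDE => /esym h0.
  have a0 := hpsd (V *m x); have b0 := @norm_vec_ge0 _ _ (or *m x).
  have ha : (ctr (V *m x) *m F *m (V *m x)) ord0 ord0 = 0.
    apply/eqP; rewrite eq_le a0 andbT -h0 lerDl //.
  have hb : (ctr (or *m x) *m (or *m x)) ord0 ord0 = 0.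
    apply/eqP; rewrite eq_le b0 andbT -h0 lerDr //.
  have ox := @norm_vec_eq0 _ _ _ hb.
  have FVx := @psd_ker _ _ _ hF hpsd _ ha.
  split => //.
  have e := congr1 (fun M => M *m x) hL; simpl in e.
  move: e; rewrite mulmxDl -mulmxA Tx mulmx0 add0r mulmxDl -!mulmxA FVx ox.
  by rewrite !mulmx0 addr0.
apply: unit_of_ker => x Tx.
pose y m := iter m (mulmx L) x.
have hy : forall m, T *m y m = 0.
  by elim => [|m IH] //=; case: (step _ IH).
have hyE : forall m l, y m l ord0 = alpha l ^+ m * x l ord0.
  elim => [|m IH] l; first by rewrite expr0 mul1r.
  by rewrite /= /L /Lamk mul_diag_mx mxE -/(y m) IH !mxE exprS mulrA.
have hs : forall m, \sum_l alpha l ^+ m * x l ord0 = 0.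
  move=> m; case: (step _ (hy m)) => /(congr1 (fun M : 'M[C]_1 => M ord0 ord0)).
  rewrite mxE => h _; rewrite mxE in h; etransitivity; last exact: h.
  by apply: eq_bigr => l _; rewrite mxE mul1r hyE.
apply/matrixP => l j; rewrite (ord1 j) mxE.
exact: (@vander_zero _ _ _ hinj (fun l => x l ord0) hs l).
Qed.

Lemma ab (R : zmodType) (a b c d e f : R) : a + (b - c) + (d - e) - (d + b - f) = a - e + (- c - - f).
Proof.
rewrite !opprD !opprK !addrA.
rewrite [a + b - c + d - e - d]addrAC addrK.
rewrite [a + b - c - e - b]addrAC [a + b - c - b]addrAC addrK.
by rewrite [a - c - e]addrAC.
Qed.

Lemma core (C : numClosedFieldType) k (T M L : 'M[C]_k) (h o : 'cV[C]_k) (or : 'rV[C]_k)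
  (hTu : T \in unitmx) (hMu : M \in unitmx) :
  let Ti := invmx T in let Mi := invmx M in
  T *m Mi *m (h *m ctr h + (M *m L - h *m or) *m Ti *m M + M *m Ti *m (ctr L *m M - o *m ctr h)
     - M *m Ti *m (ctr L *m T + T *m L - o *m or) *m Ti *m M) *m Mi *m T
  = (T *m (Mi *m h) - o) *m (ctr h *m Mi *m T - or).
Proof.
move=> Ti Mi.
rewrite !(mulmxDr, mulmxDl, mulmxN, mulNmx, mulmxA).
rewrite !(mulmxK hMu, mulmxKV hMu, mulmxK hTu, mulmxKV hTu, mulmxV hTu, mulmxV hMu, mul1mx).
exact: ab.
Qed.

Lemma char_poly_sim (C : numClosedFieldType) k (P B : 'M[C]_k) (hP : P \in unitmx) :
  char_poly (invmx P *m B *m P) = char_poly B.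
Proof.
rewrite /char_poly /char_poly_mx.
set Q := map_mx (@polyC C) P; set Qi := map_mx (@polyC C) (invmx P).
have hQ : Qi *m Q = 1%:M by rewrite -map_mxM mulVmx // map_mx1.
have -> : 'X%:M - map_mx (@polyC C) (invmx P *m B *m P)
   = Qi *m ('X%:M - map_mx (@polyC C) B) *m Q.
  rewrite !map_mxM mulmxBr mulmxBl mul_mx_scalar -scalemxAl hQ -/Qi -/Q.
  by rewrite scalemx1.
by rewrite !det_mulmx [\det Qi * _]mulrC -mulrA -det_mulmx hQ det1 mulr1.
Qed.

Lemma M_unit (C : numClosedFieldType) n k (V : 'M[C]_(n,k)) (hr : \rank V = k) :
  ctr V *m V \in unitmx.
Proof.
apply: unit_of_ker => y hy.
have : (ctr (V *m y) *m (V *m y)) ord0 ord0 = 0.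
  by rewrite ctr_mul -mulmxA (mulmxA (ctr V)) hy mulmx0 mxE.
move/norm_vec_eq0 => Vy.
have /row_fullP [B hB] : row_full V by rewrite /row_full hr.
by rewrite -[y]mul1mx -hB -mulmxA Vy mulmx0.
Qed.

Lemma col_row1_eq0 (C : numClosedFieldType) k (u : 'cV[C]_k) :
  u *m (const_mx 1 : 'rV[C]_k) = 0 -> u = 0.
Proof.
move=> h; apply/matrixP => i j; rewrite (ord1 j).
have := congr1 (fun M : 'M[C]_k => M i i) h; rewrite /= !mxE big_ord1 !mxE mulr1.
by [].
Qed.

Lemma ab2 (R : zmodType) (a b c d : R) : a + (b - c) - (a + b - d) = d - c.
Proof.
rewrite !opprD opprK !addrA [a + b - c - a]addrAC [a + b - a]addrAC subrr add0r.
by rewrite [b - c - b]addrAC subrr add0r addrC.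
Qed.
Lemma ab3 (R : zmodType) (a b d : R) : b - d - (a + b - d) = - a.
Proof.
rewrite !opprD opprK !addrA [b - d - a]addrAC [b - a - d - b]addrAC [b - a - b]addrAC subrr add0r.
by rewrite subrK.
Qed.

Lemma diagN (C : numClosedFieldType) k (d : 'rV[C]_k) :
  - diag_mx d = diag_mx (\row_j - d 0 j).
Proof. by apply/matrixP => i j; rewrite !mxE mulNrn. Qed.

Theorem theorem6p4 (C : numClosedFieldType) (n k : nat)
  (A : 'M[C]_n) (Cm : 'rV[C]_n) (F : 'M[C]_n) (alpha : 'I_k -> C)
  (hF_herm : ctr F = F)
  (h_alpha_inj : injective alpha)
  (h_alpha_re : forall j, 0 < 'Re (alpha j))
  (h_alpha_ns : forall j, (- ctr A + (alpha j)%:M) \in unitmx)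
  (h_passive : forall x : 'cV[C]_n, x != 0 -> 'Re ((ctr x *m A *m x) ord0 ord0) < 0)
  (h_Fpsd : forall x : 'cV[C]_n, 0 <= (ctr x *m F *m x) ord0 ord0)
  (h_rank : \rank (Vk A Cm alpha) = k) :
  let V := Vk A Cm alpha in
  let T := Tk F V alpha in
  let Lam := Lamk alpha in
  let X := V *m invmx T *m ctr V in
  let R := ctr Cm *m Cm + ctr A *m X + X *m A - X *m F *m X in
  let K := invmx (ctr V *m V) *m ctr V *m ctr A *m V in
  let g := invmx (ctr V *m V) *m ctr V *m ctr Cm in
  let one := (const_mx 1 : 'cV[C]_k) in
  ((ctr V *m R *m V = 0) <-> (g = invmx T *m one)) /\
  ((ctr V *m R *m V = 0) <-> (ctr Lam *m T + T *m K - ctr V *m F *m V = 0)) /\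
  (ctr V *m R *m V = 0 ->
     exists lambda : 'I_k -> C,
       char_poly (invmx (ctr V *m V) *m ctr V *m (ctr A - V *m invmx T *m ctr V *m F) *m V)
         = \prod_(j < k) ('X - (lambda j)%:P) /\
       forall j, alpha j = - (lambda j)^*).
Proof.
move=> V T Lam X R K g one.
have hE : ctr V *m R *m V = ctr V *m ctr Cm *m ctr (ctr V *m ctr Cm)
   + (ctr V *m ctr A *m V) *m invmx T *m (ctr V *m V)
   + (ctr V *m V) *m invmx T *m (ctr V *m A *m V)
   - (ctr V *m V) *m invmx T *m (ctr V *m F *m V) *m invmx T *m (ctr V *m V).
  rewrite /R /X ctr_mul !ctrK.
  by rewrite !(mulmxDr, mulmxDl, mulmxN, mulNmx, mulmxA).
have hN : invmx (ctr V *m V) *m ctr V *m (ctr A - V *m invmx T *m ctr V *m F) *m V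
   = invmx (ctr V *m V) *m (ctr V *m ctr A *m V)
     - invmx (ctr V *m V) *m (ctr V *m V) *m invmx T *m (ctr V *m F *m V).
  by rewrite !(mulmxDr, mulmxDl, mulmxN, mulNmx, mulmxA).
have hK : K = invmx (ctr V *m V) *m (ctr V *m ctr A *m V) by rewrite /K !mulmxA.
move: hE hN hK; rewrite -/R -/K.
set E := ctr V *m R *m V.
set N := invmx (ctr V *m V) *m ctr V *m (ctr A - V *m invmx T *m ctr V *m F) *m V.
move=> hE hN hK.
set or := (const_mx 1 : 'rV[C]_k).
have hor : ctr one = or by apply: ctr_const1.
have hone : ctr or = one by apply: ctr_const1.
have hT : ctr T = T by apply: T_herm.
have hTu : T \in unitmx by apply: T_unit.
have hL : ctr Lam *m T + T *m Lam = ctr V *m F *m V + one *m or by apply: Lyap.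
have hAV : ctr A *m V = V *m Lam - ctr Cm *m or by apply: AV_eq.
have hMu : ctr V *m V \in unitmx by apply: M_unit.
have hM : ctr (ctr V *m V) = ctr V *m V by rewrite ctr_mul ctrK.
have hg : g = invmx (ctr V *m V) *m (ctr V *m ctr Cm) by rewrite /g mulmxA.
have hP : ctr V *m ctr A *m V = (ctr V *m V) *m Lam - (ctr V *m ctr Cm) *m or.
  by rewrite -mulmxA hAV mulmxBr !mulmxA.
have hP' : ctr V *m A *m V = ctr (ctr V *m ctr A *m V) by rewrite !ctr_mul !ctrK mulmxA.
move: hE hN hK hg hP hP' hL hM hMu.
set M := ctr V *m V; set h := ctr V *m ctr Cm; set G := ctr V *m F *m V.
set Ti := invmx T; set Mi := invmx M.
move=> hE hN hK hg hP hP' hL hM hMu.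
have hMi : ctr Mi = Mi by rewrite /Mi ctr_inv hM.
have hPc : ctr (M *m Lam - h *m or) = ctr Lam *m M - one *m ctr h.
  by rewrite ctrB [ctr (M *m Lam)]ctr_mul [ctr (h *m or)]ctr_mul hM hone.
have hG : G = ctr Lam *m T + T *m Lam - one *m or by rewrite hL addrK.
have key : T *m Mi *m E *m Mi *m T = (T *m g - one) *m ctr (T *m g - one).
  rewrite hE hP' hP hPc hG hg ctrB hor [ctr (T *m _)]ctr_mul [ctr (Mi *m h)]ctr_mul hT hMi.
  exact: (@core _ _ _ _ _ _ _ _ hTu hMu).
clearbody E M.
have EW : E = 0 <-> T *m g = one.
  split => [E0|Tg].
    have : (T *m g - one) *m ctr (T *m g - one) = 0.
      by rewrite -key E0 mulmx0 !mul0mx.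
    by move/outer_eq0/eqP; rewrite subr_eq0 => /eqP.
  have hEe : E = M *m Ti *m (T *m Mi *m E *m Mi *m T) *m Ti *m M.
    by rewrite !mulmxA (mulmxKV hTu) (mulmxV hMu) mul1mx (mulmxK hTu) (mulmxKV hMu).
  by rewrite hEe key Tg subrr !mul0mx !mulmx0 !mul0mx.
have hK2 : K = Lam - g *m or.
  by rewrite hK hP mulmxBr mulmxA (mulVmx hMu) mul1mx hg mulmxA.
have hW : ctr Lam *m T + T *m K - G = (one - T *m g) *m or.
  by rewrite hK2 mulmxBr mulmxA hG mulmxBl ab2.
split.
  rewrite EW; split => [Tg|->]; last by rewrite (mulKVmx hTu).
  by rewrite -Tg (mulKmx hTu).
split.
  rewrite EW hW; split => [->|/col_row1_eq0/eqP]; first by rewrite subrr mul0mx.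
  by rewrite subr_eq0 => /eqP <-.
move=> /EW Tg.
have TN : T *m N = - ctr Lam *m T.
  rewrite hN hP (mulVmx hMu) mul1mx [Mi *m (_ - _)]mulmxBr (mulKmx hMu) mulmxA -hg.
  rewrite mulmxBr (mulKVmx hTu) mulmxBr mulmxA Tg.
  by rewrite hG ab3 mulNmx.
have hNe : N = Ti *m (- ctr Lam) *m T.
  by rewrite -mulmxA -TN (mulKmx hTu).
exists (fun j => - (alpha j)^*); split; last by move=> j; rewrite rmorphN /= conjCK opprK.
rewrite hNe char_poly_sim // ctr_Lam diagN char_poly_trig ?diag_mx_is_trig //.
by apply: eq_bigr => j _; rewrite !mxE eqxx mulr1n.
Qed.
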